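(* Fix $\beta\in\mathbb R$ and let $p_n=\frac12+r_n$ for $n\ge1$, with $r_n$ as in the context. Then $D(n)\sim n(\log\log n)^\beta$ as $n\to\infty$.
   Context: Fix $\beta\in\mathbb R$ and an integer $n_1\ge16$ such that $\frac14\left(\frac1n+\frac{1}{n(\log\log n)^\beta}\right)\in(0,1/2)$ for all $n\ge n_1$. Define $r_n=\frac14\left(\frac1n+\frac{1}{n(\log\log n)^\beta}\right)$ for $n\ge n_1$ and $r_n=r_{n_1}$ for $1\le n<n_1$. Consider the chain: $p_0=1$, $q_0=0$, $p_n=\frac12+r_n$, $q_n=1-p_n$ for $n\ge1$; $X=(X_k)_{k\ge0}$ is the Markov chain on $\mathbb Z_+$ with $X_0=0$, $\mathbb P(X_{k+1}=n+1\mid X_k=n)=p_n$, $\mathbb P(X_{k+1}=n-1\mid X_k=n)=q_n$. Let $\rho_k=q_k/p_k$ ($k\ge1$), and for $m\ge0$ let $D(m)=1+\sum_{j=1}^{\infty}\rho_{m+1}\cdots\rho_{m+j}$. *)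

(* Defs.v *)
From HB Require Import structures.
From mathcomp Require Import all_boot all_order all_algebra.
From mathcomp Require Import all_classical all_reals all_analysis.
Set Implicit Arguments. Unset Strict Implicit. Unset Printing Implicit Defensive.
Import Order.TTheory GRing.Theory Num.Theory.
Local Open Scope ring_scope.

Definition r_formula (R : realType) (beta : R) (n : nat) : R :=
  4^-1 * ((n%:R)^-1 + (n%:R * (ln (ln (n%:R : R))) `^ beta)^-1).

Definition r_seq (R : realType) (beta : R) (n1 n : nat) : R :=
  if (n < n1)%N then r_formula beta n1 else r_formula beta n.

Definition p_seq (R : realType) (beta : R) (n1 n : nat) : R :=
  if n == 0%N then 1 else 2^-1 + r_seq beta n1 n.

Definition q_seq (R : realType) (beta : R) (n1 n : nat) : R :=
  1 - p_seq beta n1 n.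

Definition rho (R : realType) (beta : R) (n1 k : nat) : R :=
  q_seq beta n1 k / p_seq beta n1 k.

(* D(m) = 1 + sum_{j>=1} rho_{m+1} ... rho_{m+j}, as an extended real
   (the terms are nonnegative, so the series always has a value in \bar R). *)
Definition D (R : realType) (beta : R) (n1 m : nat) : \bar R :=
  (1%E + \sum_(1 <= j <oo) (\prod_(m.+1 <= i < (m + j).+1) rho beta n1 i)%:E)%E.

(* Main.v *)
Require Import Defs.
From HB Require Import structures.
From mathcomp Require Import all_boot all_order all_algebra.
From mathcomp Require Import all_classical all_reals all_analysis.
From mathcomp Require Import lra ring.
Import Order.TTheory GRing.Theory Num.Theory.
Local Open Scope ring_scope.


Section Aux.
Variable R : realType.
Implicit Types x y a b : R.

Lemma ln_le_sub1 x : 0 < x -> ln x <= x - 1.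
Proof.
move=> x0; have := @le_ln1Dx R (x - 1).
have -> : 1 + (x - 1) = x by rewrite addrC subrK.
apply; lra.
Qed.

Lemma ln_diff a b : 0 < a -> a <= b -> 0 <= ln b - ln a <= (b - a) / a.
Proof.
move=> a0 ab; have b0 : 0 < b by lra.
apply/andP; split.
  by rewrite subr_ge0 ler_ln ?posrE.
have -> : ln b = ln a + ln (b / a).
  rewrite -lnM ?posrE ?divr_gt0 //.
  by rewrite mulrC divfK // gt_eqF.
rewrite addrAC subrr add0r.
have := @ln_le_sub1 (b / a) (divr_gt0 b0 a0).
by rewrite mulrBl divff ?gt_eqF.
Qed.

Lemma expR_near1 y : `|y| <= 2^-1 -> `|expR y - 1| <= 2 * `|y|.
Proof.
move=> hy.
have h1 := expR_ge1Dx y.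
have h2 := expR_ge1Dx (- y).
have h3 : expR y * expR (- y) = 1 by rewrite -expRD subrr expR0.
have e0 := expR_gt0 y.
have h4 : expR y * (1 - y) <= 1.
  by rewrite -h3 ler_pM2l //; lra.
case: (lerP 0 y) => y0.
  rewrite (ger0_norm y0) in hy *.
  rewrite ger0_norm; last lra.
  nra.
rewrite (ltr0_norm y0) in hy *.
rewrite ler_norml; apply/andP; split; nra.
Qed.

Lemma powR_pos a x : 0 < a -> a `^ x = expR (x * ln a).
Proof. by move=> a0; rewrite /powR gt_eqF. Qed.

End Aux.
Arguments ln_le_sub1 {R x}.
Arguments ln_diff {R a b}.
Arguments expR_near1 {R y}.
Arguments powR_pos {R a} x.

Lemma alg (R : realType) (x p Q : R) : 0 <= x -> 0 < Q ->
  x * p - ((1 - (2^-1 + 4^-1 * ((x+1)^-1 + ((x+1)*Q)^-1))) / (2^-1 + 4^-1 * ((x+1)^-1 + ((x+1)*Q)^-1))) * ((x+1) * Q)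
  = (1 - x * (Q - p) - Q / (x+1) / 2 - x * (Q - p) * (x+1)^-1 / 2 - (x+1)^-1 / 2
      - x * (Q - p) * ((x+1)*Q)^-1 / 2) / (1 + ((x+1)^-1 + ((x+1)*Q)^-1) / 2).
Proof.
move=> x0 Q0.
have a0 : x + 1 != 0 by apply/lt0r_neq0; lra.
have Qn : Q != 0 by apply/lt0r_neq0.
have t0 : 0 < (x+1)^-1 by rewrite invr_gt0; lra.
have w0 : 0 < ((x+1)*Q)^-1 by rewrite invr_gt0 mulr_gt0 //; lra.
have d1 : 2^-1 + 4^-1 * ((x+1)^-1 + ((x+1)*Q)^-1) != 0 by apply/lt0r_neq0; lra.
have d2 : 1 + ((x+1)^-1 + ((x+1)*Q)^-1) / 2 != 0 by apply/lt0r_neq0; lra.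
field.
rewrite Qn a0 /=; apply/andP; split; apply/lt0r_neq0; nra.
Qed.


Lemma Ebound (R : realType) (d s t w e : R) : `|d| <= e -> 0 <= s <= e -> 0 <= t <= e ->
  0 <= w <= e -> e <= 1 ->
  `|(1 - d - s / 2 - d * t / 2 - t / 2 - d * w / 2) / (1 + (t + w) / 2) - 1| <= 4 * e.
Proof.
move=> hd /andP[s0 s1] /andP[t0 t1] /andP[w0 w1] e1.
set N := 1 - _ - _ - _ - _ - _.
set D := 1 + _.
have D1 : 1 <= D by rewrite /D; lra.
have D0 : D != 0 by apply/lt0r_neq0; lra.
have -> : N / D - 1 = (N - D) / D.
  by rewrite [RHS]mulrBl mulfV.
have hk : `|N - D| <= 4 * e.
  move: hd; rewrite ler_norml => /andP[d1 d2].
  rewrite ler_norml /N /D; apply/andP; split; nra.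
rewrite normrM normfV (ger0_norm (le_trans ler01 D1)).
apply: le_trans hk.
rewrite ler_pdivrMr; last lra.
have := normr_ge0 (N - D); nra.
Qed.

Lemma super_step (R : realType) (c a t f g r fm : R) : 0 <= t -> c <= f - r * g ->
  c * a + t * f <= fm -> c * (a + t) + t * r * g <= fm.
Proof.
move=> t0 h1 h2.
have : t * (c + r * g) <= t * f by rewrite ler_wpM2l //; lra.
lra.
Qed.

Lemma sub_step (R : realType) (c a t f g r fm : R) : 0 <= t -> f - r * g <= c ->
  fm <= c * a + t * f -> fm <= c * (a + t) + t * r * g.
Proof.
move=> t0 h1 h2.
have : t * f <= t * (c + r * g) by rewrite ler_wpM2l //; lra.
lra.
Qed.

Lemma decay_step (R : realType) (t f g r fm ex a : R) : 0 <= t -> 0 < f ->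
  2^-1 <= f - r * g -> a <= f^-1 -> t * f <= fm * ex ->
  t * r * g <= fm * ex * expR (- a / 2).
Proof.
move=> t0 f0 h1 h2 h3.
have af : a * f <= 1.
  by move: h2; rewrite -div1r ler_pdivlMr.
have e1 := expR_ge1Dx (- a / 2).
have ep := expR_gt0 (- a / 2).
have k1 : f - 2^-1 <= f * expR (- a / 2).
  have : f * (1 + - a / 2) <= f * expR (- a / 2) by rewrite ler_wpM2l //; lra.
  lra.
have k2 : t * r * g <= t * (f * expR (- a / 2)).
  have : t * (r * g) <= t * (f * expR (- a / 2)) by rewrite ler_wpM2l //; lra.
  by rewrite mulrA.
apply: (le_trans k2); rewrite mulrA.
by rewrite ler_wpM2r //; apply: ltW.
Qed.

Lemma inv_step (R : realType) (a f u : R) : 0 < f -> 0 <= a -> f <= u -> a * u <= 1 -> a <= f^-1.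
Proof.
move=> f0 a0 fu au.
rewrite -div1r ler_pdivlMr //.
have : a * f <= a * u by rewrite ler_wpM2l.
lra.
Qed.

Lemma ratio_bound (R : realType) (d f del : R) : 0 < f -> 0 < del -> del <= 2^-1 ->
  f <= (1 + del) * d -> (1 - del) * d <= f -> `|1 - d / f| <= 2 * del.
Proof.
move=> f0 d0 d1 h1 h2.
have hd : d = f * (d / f) by rewrite mulrC divfK // gt_eqF.
move: (d / f) hd => r hd.
rewrite hd in h1 h2.
have k1 : 1 <= (1 + del) * r.
  by rewrite -(ler_pM2l f0) mulr1; move: h1; rewrite mulrCA.
have k2 : (1 - del) * r <= 1.
  by rewrite -(ler_pM2l f0) mulr1; move: h2; rewrite mulrCA.
rewrite ler_norml; apply/andP; split; nra.
Qed.


Definition ev (P : nat -> Prop) := exists N, forall n, (N <= n)%N -> P n.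

Lemma evI {P Q : nat -> Prop} : ev P -> ev Q -> ev (fun n => P n /\ Q n).
Proof.
move=> [N1 H1] [N2 H2]; exists (maxn N1 N2) => n hn.
by split; [apply: H1 | apply: H2]; apply: leq_trans hn; rewrite ?leq_maxl ?leq_maxr.
Qed.

Lemma ev_ge k : ev (fun n => (k <= n)%N).
Proof. by exists k. Qed.

Lemma evS {P : nat -> Prop} : ev P -> ev (fun n => P n.+1).
Proof. by move=> [N H]; exists N => n hn; apply: H; apply: leqW. Qed.

Lemma ev_mono {P Q : nat -> Prop} : ev P -> (forall n, P n -> Q n) -> ev Q.
Proof. by move=> [N H] PQ; exists N => n /H /PQ. Qed.

Section Main.
Variables (R : realType) (beta : R) (n1 : nat).

Definition L (n : nat) : R := ln (ln (n%:R : R)).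
Definition P n := L n `^ beta.
Definition F n := n%:R * P n.

Lemma L_large M : ev (fun n => M <= L n).
Proof.
exists (Num.trunc (expR (expR M))).+1 => n hn.
have h1 : expR (expR M) < n%:R.
  apply: (lt_le_trans (truncnS_gt _)); by rewrite ler_nat.
have n0 : 0 < (n%:R : R) by apply: lt_trans h1; apply: expR_gt0.
have h2 : expR M <= ln (n%:R : R).
  by rewrite -[X in X <= _]expRK ler_ln ?posrE ?expR_gt0 // ltW.
rewrite /L -[X in X <= _]expRK ler_ln ?posrE ?expR_gt0 //.
by apply: lt_le_trans h2; apply: expR_gt0.
Qed.

Lemma L_ge1 {n} : 1 <= L n -> 2 <= ln (n%:R : R) /\ 1 < (n%:R : R).
Proof.
move=> h.
have l0 : 0 < ln (n%:R : R).
  rewrite ltNge; apply/negP => hl; move: h; rewrite /L ln0 //; lra.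
have e : expR (L n) = ln (n%:R : R) by rewrite /L lnK ?posrE.
have := expR_ge1Dx (L n); rewrite e => h2; split; first lra.
rewrite ltNge; apply/negP => hn; have := ln_le0 hn; lra.
Qed.

Lemma G g eps : 0 < eps -> ev (fun n => L n `^ g <= eps * ln (n%:R : R)).
Proof.
move=> e0.
pose c : R := (2 * (`|g| + 1))^-1.
have c0 : 0 < c by rewrite /c invr_gt0; have := normr_ge0 g; lra.
have gc : `|g| * c <= 2^-1.
  rewrite /c ler_pdivrMr; last (have := normr_ge0 g; lra).
  rewrite ler_pdivlMl //; have := normr_ge0 g; lra.
have hL := L_large (Num.max 1 (2 * (`|g| * (-1 - ln c) - ln eps))).
apply: (ev_mono hL) => n.
rewrite ge_max => /andP [h1 h2].
have [l2 _] := L_ge1 h1.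
have L0 : 0 < L n by lra.
rewrite powR_pos // -[eps]lnK ?posrE // -[ln (n%:R : R)]lnK ?posrE; last lra.
rewrite -expRD ler_expR.
have lnL0 : 0 <= ln (L n) by apply: ln_ge0.
have hlc : ln (L n) <= c * L n - 1 - ln c.
  have := ln_le_sub1 (mulr_gt0 c0 L0).
  rewrite lnM ?posrE //; lra.
have hg : g * ln (L n) <= `|g| * ln (L n).
  by rewrite ler_wpM2r // ler_norm.
have hg2 : `|g| * ln (L n) <= `|g| * c * L n + `|g| * (-1 - ln c).
  rewrite -mulrA -mulrDr ler_wpM2l //; lra.
have hg3 : `|g| * c * L n <= 2^-1 * L n by rewrite ler_wpM2r //; lra.
rewrite -/(L n).
lra.
Qed.


Definition rh n := rho beta n1 n.
Definition E n := F n - rh n.+1 * F n.+1.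

Lemma P_gt0 {n} : 1 <= L n -> 0 < P n.
Proof. by move=> h; rewrite /P powR_pos ?expR_gt0 //; lra. Qed.

Lemma E_formula {n} : (n1 <= n.+1)%N -> 1 <= L n.+1 ->
  E n = (1 - n%:R * (P n.+1 - P n) - P n.+1 / (n%:R+1) / 2
        - n%:R * (P n.+1 - P n) * (n%:R+1)^-1 / 2 - (n%:R+1)^-1 / 2
      - n%:R * (P n.+1 - P n) * ((n%:R+1)*P n.+1)^-1 / 2)
      / (1 + ((n%:R+1)^-1 + ((n%:R+1)*P n.+1)^-1) / 2).
Proof.
move=> hn hL.
rewrite /E /F /rh /rho /q_seq /p_seq /r_seq /r_formula /=.
rewrite ltnNge hn /= -/(L n.+1) -/(P n.+1) -[n.+1%:R]natr1.
apply: alg => //; last exact: P_gt0.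
Qed.

Lemma Ldiff {n} : 1 <= L n ->
  0 <= L n.+1 - L n /\ (L n.+1 - L n) * (n%:R * ln (n%:R : R)) <= 1 /\
  0 <= ln (L n.+1) - ln (L n) /\ (ln (L n.+1) - ln (L n)) * (n%:R * ln (n%:R : R)) <= 1.
Proof.
move=> hL.
have [ln2 n1r] := L_ge1 hL.
have hlog := @ln_diff R (n%:R) (n.+1%:R) ltac:(lra) ltac:(rewrite -natr1; lra).
case/andP: hlog => h4 h5.
have hLd := @ln_diff R (ln (n%:R : R)) (ln (n.+1%:R)) ltac:(lra) ltac:(lra).
case/andP: hLd => h2 h3.
move: h2 h3; rewrite -/(L n) -/(L n.+1) => h2 h3.
have hxd := @ln_diff R (L n) (L n.+1) ltac:(lra) ltac:(lra).
case/andP: hxd => h0 h1.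
set x := ln (L n.+1) - ln (L n).
move: h5; rewrite -natr1 addrAC subrr add0r => h5.
have h7 : (ln (n%:R + 1 : R) - ln n%:R) * n%:R <= 1.
  by rewrite -ler_pdivlMr; [exact: h5 | lra].
rewrite -natr1 in h3 h7 *.
have h8 : (L n.+1 - L n) * ln (n%:R : R) <= ln (n%:R + 1) - ln n%:R.
  by rewrite -ler_pdivlMr; [ | lra].
have h6 : x <= L n.+1 - L n.
  apply: (le_trans h1); rewrite ler_pdivrMr; last lra.
  nra.
have h9 : (L n.+1 - L n) * (n%:R * ln (n%:R : R)) <= 1.
  have -> : (L n.+1 - L n) * (n%:R * ln (n%:R : R)) = ((L n.+1 - L n) * ln (n%:R : R)) * n%:R by ring.
  apply: le_trans h7; rewrite ler_wpM2r //; lra.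
split => //; split => //; split => //.
apply: le_trans h9; rewrite ler_wpM2r //; first (apply: mulr_ge0; lra).
Qed.

Lemma d_bound {n} (e' : R) : 1 <= L n -> 1 <= L n.+1 -> 2 * `|beta| <= n%:R ->
  P n <= e' * ln (n%:R : R) -> `|n%:R * (P n.+1 - P n)| <= 2 * `|beta| * e'.
Proof.
move=> hL hL1 nb hP.
have [ln2 n1r] := L_ge1 hL.
have [_ [_ [x0 xb]]] := Ldiff hL.
set x := ln (L n.+1) - ln (L n) in x0 xb.
have p0 := P_gt0 hL.
have QP : P n.+1 = P n * expR (beta * x).
  by rewrite /P !powR_pos ?(lt_le_trans ltr01) // -expRD /x; congr expR; ring.
have b0 := normr_ge0 beta.
rewrite QP; clear QP.
have xn : x * n%:R <= 1.
  have : x * n%:R * 1 <= x * n%:R * ln (n%:R : R).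
    by rewrite ler_wpM2l ?mulr_ge0 ?ler0n //; lra.
  have -> : x * n%:R * ln (n%:R : R) = x * (n%:R * ln (n%:R : R)) by ring.
  lra.
have bx : `|beta * x| <= 2^-1.
  rewrite normrM (ger0_norm x0).
  have : 2 * `|beta| * x <= n%:R * x by rewrite ler_wpM2r //.
  lra.
have := expR_near1 bx => h.
have -> : n%:R * (P n * expR (beta * x) - P n) = n%:R * (P n * (expR (beta * x) - 1)) by ring.
rewrite !normrM (ger0_norm (ltW p0)) [`|n%:R|]ger0_norm ?ler0n //.
move: h; rewrite normrM (ger0_norm x0) => h.
have h2 : n%:R * (P n * `|expR (beta * x) - 1|) <= n%:R * (P n * (2 * (`|beta| * x))).
  rewrite ler_wpM2l ?ler0n // ler_wpM2l //; lra.
apply: (le_trans h2).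
have h3 : P n * (ln (n%:R : R))^-1 <= e'.
  by rewrite ler_pdivrMr; lra.
have h4 : n%:R * x <= (ln (n%:R : R))^-1.
  rewrite -div1r ler_pdivlMr; last lra.
  have -> : n%:R * x * ln (n%:R : R) = x * (n%:R * ln (n%:R : R)) by ring.
  lra.
have -> : n%:R * (P n * (2 * (`|beta| * x))) = (2 * `|beta| * P n) * (n%:R * x) by ring.
apply: (le_trans (ler_wpM2l _ h4)); first by apply: mulr_ge0; lra.
have -> : 2 * `|beta| * P n * (ln (n%:R : R))^-1 = (2 * `|beta|) * (P n * (ln (n%:R : R))^-1) by ring.
by rewrite ler_wpM2l //; lra.
Qed.

Lemma E_close del : 0 < del -> ev (fun n => `|E n - 1| <= del).
Proof.
move=> d0.
pose e := Num.min (del / 4) 1.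
have e0 : 0 < e by rewrite /e lt_min ltr01 andbT divr_gt0.
have e1 : e <= 1 by rewrite /e ge_min lexx orbT.
have e4 : 4 * e <= del.
  have : e <= del / 4 by rewrite /e ge_min lexx.
  lra.
have b0 : 0 < 2 * `|beta| + 1 by have := normr_ge0 beta; lra.
pose e' := e / (2 * `|beta| + 1).
have e'0 : 0 < e' by rewrite divr_gt0.
have he' : 2 * `|beta| * e' <= e.
  rewrite /e' mulrA ler_pdivrMr //; have := normr_ge0 beta; nra.
clearbody e'; clearbody e.
have A := evI (ev_ge n1) (evI (L_large 1) (evI (evS (L_large 1))
   (evI (evS (G beta e e0)) (evI (evS (G (- beta) e e0)) (evI (G beta e' e'0)
   (ev_ge (Num.trunc (e^-1 + 2 * `|beta|)).+1)))))).
apply: (ev_mono A) => n [hn1 [hL [hL1 [hA4 [hA5 [hA6 hA7]]]]]]; clear A.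
rewrite -/(P n.+1) in hA4; rewrite powRN -/(P n.+1) in hA5; rewrite -/(P n) in hA6.
have {}hn1 : (n1 <= n.+1)%N by apply: leqW.
rewrite (E_formula hn1 hL1).
have [ln2 n1r] := L_ge1 hL.
have [ln21 n1r1] := L_ge1 hL1.
have ne : e^-1 + 2 * `|beta| < n%:R.
  apply: (lt_le_trans (truncnS_gt _)); by rewrite ler_nat.
have ei0 : 0 <= e^-1 by rewrite invr_ge0; apply: ltW.
have nb : 2 * `|beta| <= n%:R by clear -ne ei0; lra.
have hd : `|n%:R * (P n.+1 - P n)| <= e.
  exact: (le_trans (d_bound e' hL hL1 nb hA6)).
have lnb : ln (n.+1%:R : R) <= n%:R + 1.
  have := @ln_le_sub1 R (n.+1%:R) ltac:(clear -n1r; lra); rewrite -natr1.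
  by clear; lra.
have Q0 := P_gt0 hL1.
have p0 := P_gt0 hL.
have ee : 1 <= e * e^-1 by rewrite mulfV // gt_eqF.
set p := P n in hd hA6 p0 *; set q := P n.+1 in hd hA4 hA5 Q0 *.
set l := ln (n%:R : R) in ln2 hA6 *; set l1 := ln (n.+1%:R : R) in hA4 hA5 lnb ln21 *.
set x := (n%:R : R) in ne nb n1r lnb hd *.
set ei := e^-1 in ne ei0 ee *.
clearbody p q l l1 x ei.
clear hL hL1 hA7 hn1 hA6 e' e'0 he'.
have ninv : (x + 1)^-1 <= e.
  rewrite -div1r ler_pdivrMr; last lra.
  have := normr_ge0 beta; nra.
have hs : q / (x + 1) <= e.
  rewrite ler_pdivrMr; last lra.
  apply: (le_trans hA4); rewrite ler_wpM2l //; lra.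
have hw : ((x + 1) * q)^-1 <= e.
  rewrite invfM.
  rewrite mulrC ler_pdivrMr; last lra.
  apply: (le_trans hA5); rewrite ler_wpM2l //; lra.
apply: (le_trans _ e4).
have nn0 : 0 < x + 1 by lra.
have s0 : 0 <= q / (x + 1) by apply: divr_ge0; apply: ltW.
have t0 : 0 <= (x + 1)^-1 by rewrite invr_ge0; apply: ltW.
have w0 : 0 <= ((x + 1) * q)^-1 by rewrite invr_ge0; apply: mulr_ge0; apply: ltW.
by apply: Ebound; rewrite ?hd ?hs ?ninv ?hw ?e1 ?s0 ?t0 ?w0.
Qed.


Hypothesis hr : forall n : nat, (n1 <= n)%N ->
          0 < r_formula beta n /\ r_formula beta n < 2^-1.

Lemma rh_ge0 i : 0 <= rh i.
Proof.
rewrite /rh /rho /q_seq /p_seq.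
case: eqP => _; first by rewrite subrr mul0r.
have [h1 h2] : 0 < r_seq beta n1 i /\ r_seq beta n1 i < 2^-1.
  rewrite /r_seq; case: ltnP => h; [exact: hr | exact: hr].
by apply: divr_ge0; lra.
Qed.

Definition T m j := \prod_(m.+1 <= i < (m + j).+1) rh i.
Definition S m K := \sum_(0 <= j < K) T m j.

Lemma T0 m : T m 0 = 1.
Proof. by rewrite /T addn0 big_geq. Qed.

Lemma TS m j : T m j.+1 = T m j * rh (m + j).+1.
Proof. by rewrite /T addnS big_nat_recr //= ltnS leq_addr. Qed.

Lemma T_ge0 m j : 0 <= T m j.
Proof. by rewrite /T; apply: prodr_ge0 => i _; apply: rh_ge0. Qed.

Lemma S0 m : S m 0 = 0.
Proof. by rewrite /S big_geq. Qed.

Lemma SS m K : S m K.+1 = S m K + T m K.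
Proof. by rewrite /S big_nat_recr. Qed.

Lemma super (c : R) m : (forall n, (m <= n)%N -> c <= E n) ->
  forall K, c * S m K + T m K * F (m + K) <= F m.
Proof.
move=> h; elim=> [|K IH]; first by rewrite S0 T0 mulr0 add0r mul1r addn0.
rewrite SS TS addnS.
have := h (m + K) (leq_addr _ _); rewrite /E => hE.
exact: super_step (T_ge0 m K) hE IH.
Qed.

Lemma sub (c : R) m : (forall n, (m <= n)%N -> E n <= c) ->
  forall K, F m <= c * S m K + T m K * F (m + K).
Proof.
move=> h; elim=> [|K IH]; first by rewrite S0 T0 mulr0 add0r mul1r addn0.
rewrite SS TS addnS.
have := h (m + K) (leq_addr _ _); rewrite /E => hE.
exact: sub_step (T_ge0 m K) hE IH.
Qed.

Lemma decay m : (forall n, (m <= n)%N ->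
     0 < F n /\ 2^-1 <= E n /\ L n.+1 - L n <= (F n)^-1) ->
  forall K, T m K * F (m + K) <= F m * expR (- (L (m + K) - L m) / 2).
Proof.
move=> h; elim=> [|K IH].
  by rewrite T0 mul1r addn0 subrr oppr0 mul0r expR0 mulr1.
rewrite TS addnS.
have [F0 [hE hL]] := h (m + K) (leq_addr _ _).
move: hE; rewrite /E => hE.
have -> : expR (- (L (m + K).+1 - L m) / 2) =
   expR (- (L (m + K) - L m) / 2) * expR (- (L (m + K).+1 - L (m + K)) / 2).
  by rewrite -expRD; congr expR; ring.
rewrite mulrA; exact: decay_step (T_ge0 m K) F0 hE hL IH.
Qed.


Local Open Scope ereal_scope.

Lemma Dform m : D beta n1 m = 1 + \sum_(1 <= j <oo) (T m j)%:E.
Proof. by []. Qed.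

Lemma S_split m K : (S m K.+1 = 1 + \sum_(1 <= j < K.+1) T m j)%R.
Proof. by rewrite /S big_ltn // T0. Qed.

Lemma D_ge_S m K : (S m K.+1)%:E <= D beta n1 m.
Proof.
rewrite Dform S_split EFinD -sumEFin; apply: leeD2l.
by apply: nneseries_lim_ge => n _ _; rewrite lee_fin T_ge0.
Qed.

Lemma D_le m (B : R) : (forall K, (S m K <= B)%R) -> D beta n1 m <= B%:E.
Proof.
move=> hB.
rewrite Dform.
have -> : B%:E = 1 + (B - 1)%:E by rewrite -EFinD (addrC 1%R) subrK.
apply: leeD2l.
apply: lime_le; first by apply: is_cvg_nneseries => n _ _; rewrite lee_fin T_ge0.
near=> k.
have k1 : (0 < k)%N by near: k; exists 1%N.
rewrite sumEFin lee_fin.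
have := hB k; rewrite /S (big_ltn k1) T0 => h.
lra.

Unshelve. all: by end_near.
Qed.

Lemma D_ge0 m : 0 <= D beta n1 m.
Proof. apply: le_trans (D_ge_S m 0); rewrite lee_fin /S big_nat1 T0; lra. Qed.


Local Close Scope ereal_scope.

Lemma F_gt0 n : 1 <= L n -> 0 < F n.
Proof.
move=> h; have [_ n1r] := L_ge1 h.
by rewrite /F mulr_gt0 ?P_gt0 //; apply: lt_trans n1r.
Qed.

Lemma S_le_SS m K : S m K <= S m K.+1.
Proof. by rewrite SS lerDl T_ge0. Qed.

Lemma main_bounds del : 0 < del -> del <= 2^-1 ->
  ev (fun m => exists d : R, D beta n1 m = d%:E /\ 0 < F m /\
        F m <= (1 + del) * d /\ (1 - del) * d <= F m).
Proof.
move=> d0 d1.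
have h2 : (0 : R) < 2^-1 by rewrite invr_gt0.
have [N HN] := evI (E_close _ d0) (evI (E_close _ h2) (evI (L_large 1) (G beta _ h2))).
exists N => m hm.
have HN' : forall n, (m <= n)%N -> `|E n - 1| <= del /\ `|E n - 1| <= 2^-1 /\
    1 <= L n /\ L n `^ beta <= 2^-1 * ln (n%:R : R).
  by move=> n hn; apply: HN; apply: leq_trans hm hn.
have Fpos : forall n, (m <= n)%N -> 0 < F n.
  by move=> n /HN' [_ [_ [hL _]]]; apply: F_gt0.
have sup : forall K, (1 - del) * S m K <= F m.
  move=> K.
  have H := @super (1 - del) m.
  have H' : forall n, (m <= n)%N -> 1 - del <= E n.
    move=> n /HN' [hE _]; move: hE; rewrite ler_norml => /andP [hE _].
    by clear -hE; lra.
  have {H H'} H := H H' K.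
  have t0 := T_ge0 m K.
  have f0 := Fpos (m + K)%N (leq_addr _ _).
  have tf : 0 <= T m K * F (m + K) by apply: mulr_ge0 => //; apply: ltW.
  move: H tf; move: (T m K * F (m + K)) ((1 - del) * S m K) (F m) => a b c.
  by clear; lra.
have dm0 : 0 < 1 - del.
  have h : 2^-1 < (1 : R) by rewrite invf_lt1 // ltr1n.
  by clear -h d1; lra.
have Dfin : (D beta n1 m <= (F m / (1 - del))%:E)%E.
  apply: D_le => K; rewrite ler_pdivlMr // mulrC; exact: sup K.
have D0 := D_ge0 m.
have Dnum : D beta n1 m \is a fin_num.
  by rewrite ge0_fin_numE // (le_lt_trans Dfin) ?ltry.
exists (fine (D beta n1 m)); split; first by rewrite fineK.
split; first exact: Fpos.
have Sle : forall K, S m K <= fine (D beta n1 m).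
  move=> K; apply: le_trans (S_le_SS m K) _.
  by rewrite -lee_fin fineK // D_ge_S.
have dle : fine (D beta n1 m) <= F m / (1 - del).
  by rewrite -lee_fin fineK.
move: Sle dle; move: (fine (D beta n1 m)) => d Sle dle.
split; last by rewrite mulrC -ler_pdivlMr.
have Fm0 := Fpos m (leqnn m).
apply/ler_addgt0Pr => eta eta0.
have [N' HN'2] := L_large (L m - 2 * ln (eta / F m)).
pose K := N'.
have hK : L m - 2 * ln (eta / F m) <= L (m + K) by apply: HN'2; rewrite leq_addl.
have hsub : F m <= (1 + del) * S m K + T m K * F (m + K).
  apply: sub => n /HN' [hE _]; move: hE; rewrite ler_norml => /andP [_ hE].
  by clear -hE; lra.
have hdec : T m K * F (m + K) <= F m * expR (- (L (m + K) - L m) / 2).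
  apply: decay => n hn.
  have [_ [hE2 [hL hG]]] := HN' n hn.
  split; first exact: F_gt0.
  split; first by move: hE2; rewrite ler_norml => /andP [h _]; clear -h; lra.
  have [a0 [au _]] := Ldiff hL.
  have [ln2 n1r] := L_ge1 hL.
  apply: (@inv_step _ _ _ _ (F_gt0 n hL) a0 _ au).
  rewrite /F ler_wpM2l ?ler0n //.
  rewrite -/(P n) in hG.
  by move: hG; move: (P n) (ln (n%:R : R)) ln2 => p l ln2 hG; clear -hG ln2; lra.
have hexp : expR (- (L (m + K) - L m) / 2) <= eta / F m.
  rewrite -[eta / F m]lnK ?posrE ?divr_gt0 // ler_expR.
  by move: hK; move: (ln (eta / F m)) (L m) (L (m + K)) => a b c; clear; lra.
have h3 : F m * expR (- (L (m + K) - L m) / 2) <= eta.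
  have := ler_wpM2l (ltW Fm0) hexp.
  by rewrite [F m * (eta / F m)]mulrC divfK ?gt_eqF.
have h4 : (1 + del) * S m K <= (1 + del) * d.
  by rewrite ler_wpM2l ?Sle //; clear -d0; lra.
move: hsub hdec h3 h4.
move: (F m) ((1 + del) * S m K) (T m K * F (m + K)) (F m * expR (- (L (m + K) - L m) / 2)) ((1 + del) * d) => a b c e f.
by clear; lra.
Qed.


End Main.


Local Open Scope classical_set_scope.
Local Open Scope ring_scope.

Theorem lemma1 (R : realType) (beta : R) (n1 : nat)
  (hn1 : (16 <= n1)%N)
  (hr : forall n : nat, (n1 <= n)%N ->
          0 < r_formula beta n /\ r_formula beta n < 2^-1) :
  ((D beta n1 n * ((n%:R * (ln (ln (n%:R : R))) `^ beta)^-1)%:E)%E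
     @[n --> \oo] --> 1%E).
Proof.
have key := @main_bounds _ _ _ hr.
apply/fine_cvgP; split.
  have h2 : (0 : R) < 2^-1 by rewrite invr_gt0.
  have [N HN] := key (2^-1) h2 (lexx _).
  exists N => // n /= hn.
  have [d [hd _]] := HN n hn.
  by rewrite hd -EFinM.
apply/cvgrPdist_le => eps eps0.
pose del := Num.min (eps / 2) (2^-1).
have del0 : 0 < del by rewrite /del lt_min invr_gt0 ltr0n andbT divr_gt0.
have del1 : del <= 2^-1 by rewrite /del ge_min lexx orbT.
have del2 : 2 * del <= eps.
  have : del <= eps / 2 by rewrite /del ge_min lexx.
  by clear; lra.
have [N HN] := key del del0 del1.
exists N => // n /= hn.
have [d [hd [F0 [h1 h2]]]] := HN n hn.
rewrite hd -EFinM /=.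
exact: le_trans (@ratio_bound _ _ _ _ F0 del0 del1 h1 h2) del2.
Qed.
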